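(* Let $q\in\mathbb{C}$ with $q^4\neq1$, let $\lambda$ be a strict partition of $n$, let $\Lambda$ be a standard shifted tableau of shape $\lambda$, let $1\le k<n$, and put $a=m_k$, $b=m_{k+1}$. (a) Whenever $q_k\neq q_{k+1}^{\pm1}$ (so that $\beta_k$ is defined), the quantity $\beta_k$ does not change if $q_k$ is replaced by $q_k^{-1}$ or $q_{k+1}$ by $q_{k+1}^{-1}$, and $$\beta_k=\frac{[a+b+2][a+b][a-b+1][a-b-1]}{[a+b+1]^2[a-b]^2}.$$ (b) If $q$ is not a root of unity, then $q_k\neq q_{k+1}^{\pm1}$, so $\beta_k$ is defined.
   Context: $[k]=(q^k-q^{-k})/(q-q^{-1})$ and $[m]_{q^2}=(q^{2m}-q^{-2m})/(q^2-q^{-2})$. For each integer $m\ge0$ fix a square root $s_m$ of $[m+1]_{q^2}[m]_{q^2}$ and set $x_m=[m+1]_{q^2}-[m]_{q^2}-(q-q^{-1})s_m$. A strict partition $\lambda=(\lambda_1>\dots>\lambda_r>0)$ has shifted diagram consisting of boxes $(i,j)$ with $1\le i\le r$, $i\le j\le i+\lambda_i-1$; a standard shifted tableau is a filling with $1,\dots,n$ increasing along rows and down columns. For such $\Lambda$ and $1\le k\le n$, let $(i_k,j_k)$ be the box containing $k$, $m_k=j_k-i_k$, and $q_k=x_{m_k}$. When $q_k\neq q_{k+1}^{\pm1}$ define $\beta_k=1-(q-q^{-1})^2\left(\frac{q_{k+1}^{-1}q_k}{(q_{k+1}^{-1}q_k-1)^2}+\frac{q_{k+1}q_k}{(q_{k+1}q_k-1)^2}\right)$.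 *)

(* Defs.v *)
(* The base field is C = R[i] for an arbitrary realType R
   (i.e. the complex numbers). *)
From HB Require Import structures.
From mathcomp Require Import all_boot all_order all_algebra.
From mathcomp Require Import complex.
From mathcomp Require Import reals.
Set Implicit Arguments. Unset Strict Implicit. Unset Printing Implicit Defensive.
Import Order.TTheory GRing.Theory Num.Theory.
Local Open Scope ring_scope.

Definition strict_partition (la : seq nat) : bool :=
  sorted (fun x y : nat => (y < x)%N) la && all (fun x : nat => (0 < x)%N) la.

Definition partition_of (la : seq nat) (n : nat) : bool :=
  strict_partition la && (sumn la == n).

(* lambda_i with 1-based index i *)
Definition part (la : seq nat) (i : nat) : nat := nth 0%N la i.-1.

(* the box (i,j) (1-based) lies in the shifted diagram of lambda:
   1 <= i <= r and i <= j <= i + lambda_i - 1 *)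
Definition in_shifted (la : seq nat) (b : nat * nat) : bool :=
  let: (i, j) := b in
  [&& (1 <= i)%N, (i <= size la)%N, (i <= j)%N & (j + 1 <= i + part la i)%N].

(* A standard shifted tableau of shape lambda (with n boxes) is encoded by the
   map  pos : k |-> (i_k, j_k)  sending each entry k in {1,...,n} to the box
   containing it. *)
Definition standard_shifted_tableau (la : seq nat) (n : nat)
    (pos : nat -> nat * nat) : Prop :=
  [/\ (forall k, (1 <= k <= n)%N -> in_shifted la (pos k)),
      (forall k l, (1 <= k <= n)%N -> (1 <= l <= n)%N -> pos k = pos l -> k = l),
      (forall b, in_shifted la b -> exists2 k, (1 <= k <= n)%N & pos k = b),
      (forall k l, (1 <= k <= n)%N -> (1 <= l <= n)%N ->
         (pos k).1 = (pos l).1 -> ((pos k).2 < (pos l).2)%N -> (k < l)%N) &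
      (forall k l, (1 <= k <= n)%N -> (1 <= l <= n)%N ->
         (pos k).2 = (pos l).2 -> ((pos k).1 < (pos l).1)%N -> (k < l)%N)].

Definition mcont (pos : nat -> nat * nat) (k : nat) : nat :=
  ((pos k).2 - (pos k).1)%N.

Section QNumbers.
Variable F : fieldType.
Variable q : F.

Definition qnum (k : int) : F := (q ^ k - q ^ (- k)) / (q - q^-1).

Definition qint2 (m : nat) : F :=
  (q ^+ (2 * m) - q ^- (2 * m)) / (q ^+ 2 - q ^- 2).

(* x_m = [m+1]_{q^2} - [m]_{q^2} - (q - q^-1) s_m, for a chosen family s of
   square roots s_m of [m+1]_{q^2}[m]_{q^2} *)
Definition xm (s : nat -> F) (m : nat) : F :=
  qint2 m.+1 - qint2 m - (q - q^-1) * s m.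

Definition beta (qk qk1 : F) : F :=
  1 - (q - q^-1) ^+ 2 *
      ((qk1^-1 * qk) / (qk1^-1 * qk - 1) ^+ 2 + (qk1 * qk) / (qk1 * qk - 1) ^+ 2).

End QNumbers.

Definition is_root_of_unity (F : nzRingType) (q : F) : Prop :=
  exists2 N : nat, (0 < N)%N & q ^+ N = 1.

(* Main.v *)
Require Import Defs.
From HB Require Import structures.
From mathcomp Require Import all_boot all_order all_algebra.
From mathcomp Require Import complex.
From mathcomp Require Import reals.
From mathcomp Require Import ring zify.
Import Order.TTheory GRing.Theory Num.Theory.
Lemma part_lt la i : strict_partition la -> (1 <= i)%N -> (i < size la)%N ->
  (part la i.+1 < part la i)%N.
Proof.
case/andP=> so _ i1 isz; rewrite /part /=.
have tr : transitive (fun x y : nat => (y < x)%N).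
  by move=> x y z h1 h2; apply: ltn_trans h2 h1.
have := sorted_ltn_nth tr 0%N so; move=> /(_ i.-1 i); apply.
- by rewrite inE; lia.
- by rewrite inE; lia.
- lia.
Qed.

Lemma up_box la i j : strict_partition la -> (1 <= i)%N ->
  in_shifted la (i.+1, j.+1) -> in_shifted la (i, j.+1) && in_shifted la (i, j).
Proof.
move=> sp i1; rewrite /in_shifted; case/and4P=> _ h2 h3 h4.
have hp := @part_lt la i sp i1 h2.
apply/andP; split; apply/and4P; split; lia.
Qed.

Section Tab.
Variables (la : seq nat) (n : nat) (pos : nat -> nat * nat).
Hypothesis sp : strict_partition la.
Hypothesis T : standard_shifted_tableau la n pos.

Lemma diag_le d : forall l0 i j, (1 <= l0 <= n)%N -> pos l0 = (i, j) ->
  in_shifted la (i + d, j + d) ->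
  exists2 l, (1 <= l <= n)%N & pos l = (i + d, j + d) /\ (l0 <= l)%N.
Proof.
case: T => Tin Tinj Tsurj Trow Tcol.
elim: d => [|d IH] l0 i j hl0 hp hb.
  exists l0 => //; by rewrite !addn0.
have i1 : (1 <= i)%N by move: (Tin l0 hl0); rewrite hp /in_shifted; case/and4P.
rewrite !addnS in hb.
have /andP[b1 b2] := @up_box la _ _ sp (ltn_addr _ i1) hb.
have [l1 hl1 [p1 le1]] := IH l0 i j hl0 hp b2.
have [m hm pm] := Tsurj _ b1.
have [l2 hl2 p2] := Tsurj _ hb.
exists l2 => //; split; first by rewrite !addnS.
have r1 : (l1 < m)%N by apply: Trow => //; rewrite p1 pm //=.
have r2 : (m < l2)%N by apply: Tcol => //; rewrite pm p2 //=.
lia.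
Qed.

Lemma diag_strict d l0 l2 i j : (1 <= l0 <= n)%N -> (1 <= l2 <= n)%N ->
  pos l0 = (i, j) -> pos l2 = (i + d.+1, j + d.+1) ->
  exists2 m, (1 <= m <= n)%N & (l0 < m < l2)%N.
Proof.
move=> hl0 hl2 p0 p2.
have Tc := T; case: Tc => Tin Tinj Tsurj Trow Tcol.
have i1 : (1 <= i)%N by move: (Tin l0 hl0); rewrite p0 /in_shifted; case/and4P.
have hb := Tin l2 hl2; rewrite p2 !addnS in hb.
have /andP[b1 b2] := @up_box la _ _ sp (ltn_addr _ i1) hb.
have [l1 hl1 [p1 le1]] := @diag_le d l0 i j hl0 p0 b2.
have [m hm pm] := Tsurj _ b1.
exists m => //.
have r1 : (l1 < m)%N by apply: Trow => //; rewrite p1 pm //=.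
have r2 : (m < l2)%N by apply: Tcol => //; rewrite pm p2 //= !addnS.
lia.
Qed.

Lemma mcont_neq k : (1 <= k)%N -> (k < n)%N -> mcont pos k != mcont pos k.+1.
Proof.
move=> k1 kn.
have Tc := T; case: Tc => Tin Tinj Tsurj Trow Tcol.
have hk : (1 <= k <= n)%N by lia.
have hk1 : (1 <= k.+1 <= n)%N by lia.
have := Tin _ hk; have := Tin _ hk1; rewrite /mcont.
case E1: (pos k) => [i j]; case E2: (pos k.+1) => [i' j'] /= /and4P[_ _ c1 _] /and4P[_ _ c2 _].
apply/negP => /eqP e.
have [lt|gt|eq] := ltngtP i i'.
- have E : pos k.+1 = (i + (i' - i).-1.+1, j + (i' - i).-1.+1).
    by rewrite E2; congr pair; lia.
  have [m _ /andP[h1 h2]] := @diag_strict (i' - i).-1 k k.+1 i j hk hk1 E1 E.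
  lia.
- have E : pos k = (i' + (i - i').-1.+1, j' + (i - i').-1.+1).
    by rewrite E1; congr pair; lia.
  have [m _ /andP[h1 h2]] := @diag_strict (i - i').-1 k.+1 k i' j' hk1 hk E2 E.
  lia.
- have : pos k = pos k.+1 by rewrite E1 E2; congr pair; lia.
  move/(Tinj _ _ hk hk1); lia.
Qed.
End Tab.

Local Open Scope ring_scope.

Section Alg.
Variable F : fieldType.
Variable q : F.
Hypothesis q0 : q != 0.
Hypothesis q4 : q ^+ 4 != 1.
Hypothesis two0 : (2 : F) != 0.

Lemma q2m1 : q ^+ 2 - 1 != 0.
Proof. apply: contra q4 => /eqP h. rewrite (_ : q^+4 = (q^+2 - 1 + 1)^+2); last by rewrite subrK -exprM.
by rewrite h add0r expr1n. Qed.
Lemma q2p1 : q ^+ 2 + 1 != 0.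
Proof. apply: contra q4 => /eqP h. rewrite (_ : q^+4 = (q^+2 + 1 - 1)^+2); last by rewrite addrK -exprM.
by rewrite h sub0r sqrrN expr1n. Qed.

Lemma wq0 : q - q^-1 != 0.
Proof. have := q2m1; apply: contra => /eqP h. apply/eqP.
have -> : q^+2 - 1 = q * (q - q^-1) by field.
by rewrite h mulr0. Qed.
Lemma pq0 : q + q^-1 != 0.
Proof. have := q2p1; apply: contra => /eqP h. apply/eqP.
have -> : q^+2 + 1 = q * (q + q^-1) by field.
by rewrite h mulr0. Qed.
Lemma dq0 : q ^+ 2 - q ^- 2 != 0.
Proof. have := mulf_neq0 wq0 pq0; apply: contra => /eqP h. apply/eqP.
rewrite -h; field; exact: q0. Qed.

Lemma nz1 : q * q + 1 != 0. Proof. by rewrite -expr2 q2p1. Qed.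
Lemma nz2 : (q * q) ^+ 2 - 1 != 0. Proof. by rewrite -expr2 -exprM subr_eq0. Qed.
Lemma nz3 : q * q - 1 != 0. Proof. by rewrite -expr2 q2m1. Qed.

Definition Am (m : nat) := (q ^+ (2 * m).+1 + (q ^+ (2 * m).+1)^-1) / (q + q^-1).

Lemma xm_quad s m : s m ^+ 2 = qint2 q m.+1 * qint2 q m ->
  let x := xm q s m in x ^+ 2 - 2 * Am m * x + 1 = 0.
Proof.
move=> hs x.
have hA : qint2 q m.+1 - qint2 q m = Am m.
  rewrite /qint2 /Am.
  have T0 : q ^+ (2 * m) != 0 by rewrite expf_neq0.
  have e1 : q ^+ (2 * m.+1) = q ^+ (2 * m) * q ^+ 2 by rewrite -exprD mulnS addnC.
  have e2 : q ^+ (2 * m).+1 = q ^+ (2 * m) * q by rewrite exprSr.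
  rewrite e1 e2.
  move: (q^+(2 * m)) T0 => T T0.
  have := dq0; have := pq0 => h1 h2.
  field. by rewrite q0 T0 nz1 nz2.
have hB : Am m ^+ 2 - (q - q^-1) ^+ 2 * (qint2 q m.+1 * qint2 q m) = 1.
  rewrite /qint2 /Am.
  have T0 : q ^+ (2 * m) != 0 by rewrite expf_neq0.
  have e1 : q ^+ (2 * m.+1) = q ^+ (2 * m) * q ^+ 2 by rewrite -exprD mulnS addnC.
  have e2 : q ^+ (2 * m).+1 = q ^+ (2 * m) * q by rewrite exprSr.
  rewrite e1 e2.
  move: (q^+(2 * m)) T0 => T T0.
  field. by rewrite q0 T0 nz1 nz2.
have E : forall A w S : F, (A - w * S) ^+ 2 - 2 * A * (A - w * S) + 1 = 1 - (A ^+ 2 - w ^+ 2 * S ^+ 2) by move=> *; ring.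
rewrite /x /xm hA E hs hB subrr //.
Qed.

Lemma beta_XY x y : x != 0 -> y != 0 -> x != y -> x * y != 1 ->
  beta q x y = 1 - (q - q^-1) ^+ 2 * ((x + x^-1) * (y + y^-1) - 4) / ((x + x^-1) - (y + y^-1)) ^+ 2.
Proof.
move=> x0 y0 xy xy1. rewrite /beta.
have h1 : x - y != 0 by rewrite subr_eq0.
have h2 : x * y - 1 != 0 by rewrite subr_eq0.
field.
have -> : (x * x + 1) * y + - (y * y + 1) * x = (x - y) * (x * y - 1) by ring.
have -> : x + -1 * y = x - y by ring.
by rewrite x0 y0 q0 [y * x]mulrC h2 mulf_neq0.
Qed.

Lemma final_id (al be : F) : al != 0 -> be != 0 ->
  let u := al ^+ 2 * q in let v := be ^+ 2 * q in
  let X := 2 * ((u + u^-1) / (q + q^-1)) in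
  let Y := 2 * ((v + v^-1) / (q + q^-1)) in
  al * be * q - (al * be * q)^-1 != 0 ->
  al / be - (al / be)^-1 != 0 ->
  let N z := (z - z^-1) / (q - q^-1) in
  1 - (q - q^-1) ^+ 2 * (X * Y - 4) / (X - Y) ^+ 2 =
  N (al * be * q ^+ 2) * N (al * be) * N (al / be * q) * N (al / be * q^-1)
  / (N (al * be * q) ^+ 2 * N (al / be) ^+ 2).
Proof.
move=> a0 b0 u v X Y n1 n2 N.
rewrite /N /X /Y /u /v.
have n2' : al * al + - be * be != 0.
  have : al / be - (al / be)^-1 = (al * al + - be * be) / (al * be) by field; rewrite ?a0 ?b0.
  move=> e; move: n2; rewrite e; apply: contra => /eqP ->; by rewrite mul0r.
have n1' : al * be * q * (al * be * q) - 1 != 0.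
  have : al * be * q - (al * be * q)^-1 = (al * be * q * (al * be * q) - 1) / (al * be * q) by field; rewrite ?a0 ?b0 ?q0.
  move=> e; move: n1; rewrite e; apply: contra => /eqP ->; by rewrite mul0r.
field.
have -> : 2 * (al ^+ 2 * q * (al ^+ 2 * q) + 1) * be ^+ 2 +
      - (2 * (be ^+ 2 * q * (be ^+ 2 * q) + 1)) * al ^+ 2 = 2 * (al * al + - be * be) * (al * be * q * (al * be * q) - 1) by ring.
by rewrite q0 nz3 a0 b0 n2' n1' nz1 !mulf_neq0.
Qed.

Lemma xm_props s m : s m ^+ 2 = qint2 q m.+1 * qint2 q m ->
  xm q s m != 0 /\ xm q s m + (xm q s m)^-1 = 2 * Am m.
Proof.
move=> hs; have hq := @xm_quad s m hs; simpl in hq; move: (xm q s m) hq => x hq.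
have x0 : x != 0.
  apply/eqP => e; move: hq; rewrite e; rewrite (_ : (0:F) ^+ 2 - 2 * Am m * 0 + 1 = 1); last ring. move/eqP.
  by rewrite oner_eq0.
split=> //.
have e : x ^+ 2 + 1 = 2 * Am m * x by apply/eqP; rewrite -subr_eq0 -hq; apply/eqP; ring.
have -> : x + x^-1 = (x ^+ 2 + 1) / x by field.
by rewrite e mulfK.
Qed.

Lemma Am_expr m : Am m = ((q ^+ m) ^+ 2 * q + ((q ^+ m) ^+ 2 * q)^-1) / (q + q^-1).
Proof. by rewrite /Am exprSr -exprM mulnC. Qed.

Lemma XY_neq (x y : F) : x != 0 -> y != 0 -> x != y -> x * y != 1 -> x + x^-1 != y + y^-1.
Proof.
move=> x0 y0 h1 h2.
have e : x + x^-1 - (y + y^-1) = (x - y) * (x * y - 1) / (x * y) by field; rewrite ?x0 ?y0.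
rewrite -subr_eq0 e !mulf_neq0 // ?invr_eq0 ?mulf_neq0 // subr_eq0 //.
Qed.

Lemma XY_eq (x y : F) : x != 0 -> y != 0 -> x + x^-1 != y + y^-1 -> (x != y) && (x != y^-1).
Proof.
move=> x0 y0 h; apply/andP; split; apply: contra h => /eqP ->//.
by rewrite invrK addrC.
Qed.

Lemma Am_diff a b : Am a - Am b =
  (q ^+ a * q ^+ b * q - (q ^+ a * q ^+ b * q)^-1) * (q ^+ a / q ^+ b - (q ^+ a / q ^+ b)^-1) / (q + q^-1).
Proof.
rewrite !Am_expr.
have a0 : q ^+ a != 0 by rewrite expf_neq0.
have b0 : q ^+ b != 0 by rewrite expf_neq0.
move: (q ^+ a) (q ^+ b) a0 b0 => al be a0 b0.
field. by rewrite q0 a0 b0 nz1.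
Qed.

Lemma sq1 (z : F) : z != 0 -> z - z^-1 = 0 -> z ^+ 2 = 1.
Proof.
move=> z0 h; apply/eqP; rewrite -subr_eq0.
have -> : z ^+ 2 - 1 = z * (z - z^-1) by field.
by rewrite h mulr0.
Qed.

Lemma not_rou_neq (a b : nat) : ~ is_root_of_unity q -> a != b -> Am a - Am b != 0.
Proof.
move=> nr ab.
have a0 : q ^+ a != 0 by rewrite expf_neq0.
have b0 : q ^+ b != 0 by rewrite expf_neq0.
rewrite Am_diff !mulf_neq0 // ?invr_eq0 ?pq0 //.
- apply/negP => /eqP h0; have h := @sq1 _ (mulf_neq0 (mulf_neq0 a0 b0) q0) h0; apply: nr; exists (2 * (a + b + 1))%N; first by rewrite muln_gt0 addn1.
  rewrite -h mulnC exprM !exprD expr1; ring.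
- apply/negP => /eqP h0; have h := @sq1 _ (mulf_neq0 a0 (invr_neq0 b0)) h0; apply: nr.
  have e : q ^+ (2 * a) = q ^+ (2 * b).
    rewrite mulnC exprM [(2 * b)%N]mulnC exprM.
    have -> : (q ^+ a) ^+ 2 = (q ^+ a / q ^+ b) ^+ 2 * (q ^+ b) ^+ 2 by field.
    by rewrite h mul1r.
  case: (ltngtP a b) => hab.
  + exists (2 * (b - a))%N; first by rewrite muln_gt0 subn_gt0 hab.
    apply: (mulfI (expf_neq0 (2 * a) q0)); rewrite -exprD mulr1 -mulnDr subnKC ?e //; exact: ltnW.
  + exists (2 * (a - b))%N; first by rewrite muln_gt0 subn_gt0 hab.
    apply: (mulfI (expf_neq0 (2 * b) q0)); rewrite -exprD mulr1 -mulnDr subnKC ?e //; exact: ltnW.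
  + by move: ab; rewrite hab eqxx.
Qed.
Lemma inv_mul1 (x y : F) : y != 0 -> (x == y^-1) = (x * y == 1).
Proof. by move=> y0; rewrite -(inj_eq (mulIf y0)) mulVf. Qed.
End Alg.



Theorem lemma2p30 (R : realType) (q : R[i]) (n : nat) (la : seq nat)
    (pos : nat -> nat * nat) (s : nat -> R[i]) (k : nat) :
  q != 0 -> q ^+ 4 != 1 ->
  partition_of la n ->
  standard_shifted_tableau la n pos ->
  (1 <= k)%N -> (k < n)%N ->
  (forall m : nat, s m ^+ 2 = qint2 q m.+1 * qint2 q m) ->
  let a := mcont pos k in
  let b := mcont pos k.+1 in
  let qk := xm q s a in
  let qk1 := xm q s b in
  (* (a) *)
  ((qk != qk1) && (qk != qk1^-1) ->
     [/\ beta q qk^-1 qk1 = beta q qk qk1,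
         beta q qk qk1^-1 = beta q qk qk1 &
         beta q qk qk1 =
           qnum q (a%:Z + b%:Z + 2) * qnum q (a%:Z + b%:Z)
           * qnum q (a%:Z - b%:Z + 1) * qnum q (a%:Z - b%:Z - 1)
           / (qnum q (a%:Z + b%:Z + 1) ^+ 2 * qnum q (a%:Z - b%:Z) ^+ 2)])
  /\
  (* (b) *)
  (~ is_root_of_unity q -> (qk != qk1) && (qk != qk1^-1)).
Proof.
move=> q0 q4 pl T k1 kn hs a b qk qk1.
have two0 : (2 : R[i]) != 0 by rewrite pnatr_eq0.
have [x0 xX] := @xm_props _ q q0 q4 s a (hs a).
have [y0 yX] := @xm_props _ q q0 q4 s b (hs b).
rewrite -/qk in x0 xX; rewrite -/qk1 in y0 yX.
split.
  move=> /andP[ne1 ne2].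
  have ne2' : qk * qk1 != 1 by rewrite -inv_mul1.
  have BXY := @beta_XY _ q q0.
  have c1 : qk^-1 != qk1 by apply: contra ne2 => /eqP <-; rewrite invrK.
  have c2 : qk^-1 * qk1 != 1.
    by apply: contra ne1 => /eqP h; apply/eqP; rewrite -(mulVKf x0 qk1) h mulr1.
  have c4 : qk * qk1^-1 != 1.
    by apply: contra ne1 => /eqP h; apply/eqP; rewrite -(divfK y0 qk) h mul1r.
  have B0 := BXY _ _ x0 y0 ne1 ne2'.
  split.
  - by rewrite (BXY _ _ (invr_neq0 x0) y0 c1 c2) B0 invrK [qk^-1 + qk]addrC.
  - by rewrite (BXY _ _ x0 (invr_neq0 y0) ne2 c4) B0 invrK [qk1^-1 + qk1]addrC.
  have n12 : Am _ q a - Am _ q b != 0.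
    have := @XY_neq _ _ _ x0 y0 ne1 ne2'; rewrite xX yX; apply: contra => /eqP e.
    by apply/eqP; rewrite -[Am _ q a](subrK (Am _ q b)) e add0r.
  rewrite (@Am_diff _ q q0 q4) !mulf_eq0 !negb_or in n12.
  case/andP: n12 => /andP[n1 n2] _.
  rewrite B0 xX yX !Am_expr.
  rewrite /qnum -!invr_expz !expfzDr // -!invr_expz -!exprnP !expr1.
  have FI := @final_id _ q q0 q4 two0 (q ^+ a) (q ^+ b) (expf_neq0 _ q0) (expf_neq0 _ q0) n1 n2.
  rewrite /= expr2 in FI; rewrite FI //.
move=> nr.
have sp : strict_partition la by case/andP: pl.
have ab : a != b := @mcont_neq la n pos sp T k k1 kn.
apply: XY_eq => //; rewrite xX yX.
have := @not_rou_neq _ q q0 q4 a b nr ab; apply: contra => /eqP e.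
apply/eqP; apply: (mulfI two0); by rewrite mulr0 mulrBr e subrr.
Qed.
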